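(* (a) If $\zeta\in\mathbb Q^{\mathbb Z/n\mathbb Z}$ does not lie on any affine wall, then for modules over the chainsaw quiver (as in the context) $\zeta$-stability is equivalent to $\zeta$-semistability. (b) If $d_0=0$ and $\zeta=(\zeta_1,\dots,\zeta_{n-1})\in\mathbb Q^{n-1}$ does not lie on any finite wall, then $\zeta$-stability is equivalent to $\zeta$-semistability.
   Context: Fix $\underline d=(d_l)_{l\in\mathbb Z/n\mathbb Z}$. A module over the chainsaw quiver is a collection $(V_\bullet,A_\bullet,B_\bullet,p_\bullet,q_\bullet)$ with $V_l$ of dimension $d_l$, $A_l\in\operatorname{End}V_l$, $B_l\in\operatorname{Hom}(V_l,V_{l+1})$, $p_l\in\operatorname{Hom}(W_{l-1},V_l)$, $q_l\in\operatorname{Hom}(V_l,W_l)$ with $W_l$ one-dimensional, satisfying $A_{l+1}B_l-B_lA_l+p_{l+1}q_l=0$ for all $l$. For $\zeta\in\mathbb Q^{\mathbb Z/n\mathbb Z}$ the module is $\zeta$-semistable if (a) every $\mathbb Z/n\mathbb Z$-graded subspace $V'_\bullet\subset V_\bullet$ with $A_l(V'_l)\subset V'_l$, $B_l(V'_l)\subset V'_{l+1}$, $V'_l\subset\operatorname{Ker}q_l$ satisfies $\sum_l\zeta_l\dim V'_l\le0$, and (b) every graded $V'_\bullet$ with $A_l(V'_l)\subset V'_l$, $B_l(V'_l)\subset V'_{l+1}$, $\operatorname{Im}p_l\subset V'_l$ satisfies $\sum_l\zeta_l\operatorname{codim}V'_l\ge0$; it is $\zeta$-stable if these inequalities are strict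 unless $V'_\bullet=0$ in (a) and $V'_\bullet=V_\bullet$ in (b). For $l,l'\in\mathbb Z/n\mathbb Z$ let $[l,l']$ be the cyclic interval from $l$ to $l'$ (inclusive). Affine walls: the hyperplanes $H_{l,l'}=\{\zeta:\sum_{k\in[l,l']}\zeta_k=0\}$ for $l,l'\in\mathbb Z/n\mathbb Z$, and $H=\{\zeta:\sum_{l\in\mathbb Z/n\mathbb Z}\zeta_l=0\}$. When $d_0=0$ the coordinate $\zeta_0$ is irrelevant and stability conditions are $\zeta\in\mathbb Q^{n-1}$; finite walls are $H_{l,l'}=\{\zeta:\sum_{k=l}^{l'}\zeta_k=0\}\subset\mathbb Q^{n-1}$ for $0<l\le l'<n$. *)

(* Defs.v *)
From HB Require Import structures.
From mathcomp Require Import all_boot all_order all_algebra.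
Set Implicit Arguments. Unset Strict Implicit. Unset Printing Implicit Defensive.
Import Order.TTheory GRing.Theory Num.Theory.
Local Open Scope ring_scope.

(* Vertices are indexed by Z/nZ, represented as 'I_n (n > 0), with cyclic
   successor [ordS].  V_l = F^(d l) (row vectors); a linear map U -> V is a
   matrix acting on the right (row-vector convention), so the composite
   "f then g" is [M_f *m M_g].  W_l is one-dimensional (F^1). *)

Record chainsaw_module (F : fieldType) (n : nat) (d : 'I_n -> nat) := ChainsawModule {
  cA : forall l : 'I_n, 'M[F]_(d l);
  cB : forall l : 'I_n, 'M[F]_(d l, d (ordS l));
  cp : forall l : 'I_n, 'M[F]_(1, d l);               (* p_l : W_{l-1} -> V_l *)
  cq : forall l : 'I_n, 'M[F]_(d l, 1);
  (* A_{l+1} B_l - B_l A_l + p_{l+1} q_l = 0 *)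
  crel : forall l : 'I_n,
    cB l *m cA (ordS l) - cA l *m cB l + cq l *m cp (ordS l) = 0
}.

Section Stability.
Variables (F : fieldType) (n : nat) (d : 'I_n -> nat).
Variable (M : chainsaw_module F d).

(* A graded subspace V'_l of V_l is given by a matrix whose row space is V'_l. *)
Definition AB_invariant (V' : forall l : 'I_n, 'M[F]_(d l)) : Prop :=
  forall l : 'I_n,
    (V' l *m cA M l <= V' l)%MS /\ (V' l *m cB M l <= V' (ordS l))%MS.

Definition sub_a (V' : forall l : 'I_n, 'M[F]_(d l)) : Prop :=
  AB_invariant V' /\ forall l : 'I_n, (V' l <= kermx (cq M l))%MS.

Definition sub_b (V' : forall l : 'I_n, 'M[F]_(d l)) : Prop :=
  AB_invariant V' /\ forall l : 'I_n, (cp M l <= V' l)%MS.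

Definition zdim (zeta : 'I_n -> rat) (V' : forall l : 'I_n, 'M[F]_(d l)) : rat :=
  \sum_(l < n) zeta l * (\rank (V' l))%:R.

Definition zcodim (zeta : 'I_n -> rat) (V' : forall l : 'I_n, 'M[F]_(d l)) : rat :=
  \sum_(l < n) zeta l * (d l - \rank (V' l))%:R.

Definition is_zero_sub (V' : forall l : 'I_n, 'M[F]_(d l)) : Prop :=
  forall l : 'I_n, \rank (V' l) == 0%N.

Definition is_full_sub (V' : forall l : 'I_n, 'M[F]_(d l)) : Prop :=
  forall l : 'I_n, \rank (V' l) == d l.

Definition zeta_semistable (zeta : 'I_n -> rat) : Prop :=
  (forall V', sub_a V' -> zdim zeta V' <= 0) /\
  (forall V', sub_b V' -> 0 <= zcodim zeta V').

Definition zeta_stable (zeta : 'I_n -> rat) : Prop :=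
  (forall V', sub_a V' -> ~ is_zero_sub V' -> zdim zeta V' < 0) /\
  (forall V', sub_b V' -> ~ is_full_sub V' -> 0 < zcodim zeta V').

End Stability.

(* cyclic interval [l, l'] = {l, l+1, ..., l'} in Z/nZ (so [l,l] = {l}) *)
Definition cyc_interval (n : nat) (l l' : 'I_n) : {set 'I_n} :=
  [set k : 'I_n | ((k + n - l) %% n <= (l' + n - l) %% n)%N].

(* zeta lies on no affine wall H_{l,l'} nor on H *)
Definition off_affine_walls (n : nat) (zeta : 'I_n -> rat) : Prop :=
  (forall l l' : 'I_n, \sum_(k in cyc_interval l l') zeta k != 0) /\
  \sum_(k < n) zeta k != 0.

Definition off_finite_walls (n : nat) (zeta : 'I_n -> rat) : Prop :=
  forall l l' : nat, (0 < l)%N -> (l <= l')%N -> (l' < n)%N ->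
    \sum_(k < n | (l <= k <= l')%N) zeta k != 0.

(* Main.v *)
Require Import Defs.
From HB Require Import structures.
From mathcomp Require Import all_boot all_order all_algebra.
From mathcomp Require Import ring lra zify.
From Stdlib Require Import Classical_Prop.
Set Implicit Arguments. Unset Strict Implicit. Unset Printing Implicit Defensive.
Import Order.TTheory GRing.Theory Num.Theory.
Local Open Scope ring_scope.

Section Cyc.
Variable F : fieldType.

Definition cyc k (M : 'M[F]_k) (x : 'rV_k) : 'M_(k.+1, k) := \matrix_(i < k.+1) (x *m M ^+ i).

Lemma cyc_x k (M : 'M[F]_k) x : (x <= cyc M x)%MS.
Proof. by have := row_sub 0 (cyc M x); rewrite rowK expr0 mulmx1. Qed.

Lemma cyc_min k (M : 'M[F]_k) x m (U : 'M_(m, k)) :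
  (U *m M <= U)%MS -> (x <= U)%MS -> (cyc M x <= U)%MS.
Proof.
move=> hU hx; apply/row_subP => i; rewrite rowK.
elim: (nat_of_ord i) => [|j IH]; first by rewrite expr0 mulmx1.
by rewrite exprSr -mulmxE mulmxA; apply: submx_trans (submxMr _ IH) hU.
Qed.

Lemma horner_mx_sum k (M : 'M[F]_k.+1) (p : {poly F}) :
  horner_mx M p = \sum_(i < size p) p`_i *: M ^+ i.
Proof.
rewrite -{1}(coefK p) poly_def linear_sum; apply: eq_bigr => i _.
by rewrite linearZ /= rmorphXn /= horner_mx_X.
Qed.

Lemma CH_rec k (M : 'M[F]_k) : exists c : 'I_k -> F, M ^+ k = \sum_(i < k) c i *: M ^+ i.
Proof.
case: k M => [|k] M.
  by exists (fun _ => 0); rewrite big_ord0 expr0; apply/matrixP => [[]].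
have := Cayley_Hamilton M; rewrite horner_mx_sum size_char_poly big_ord_recr /=.
have := char_poly_monic M; rewrite monicE lead_coefE size_char_poly /= => /eqP ->.
rewrite scale1r => /eqP; rewrite addrC addr_eq0 => /eqP ->.
exists (fun i => - (char_poly M)`_i).
rewrite -sumrN; apply: eq_bigr => i _; by rewrite scaleNr.
Qed.

Lemma cyc_pow k (M : 'M[F]_k) x j : (x *m M ^+ j <= cyc M x)%MS.
Proof.
have [c hc] := CH_rec M.
elim: j {-2}j (leqnn j) => [|j IH] j0 hj0.
  by rewrite leqn0 in hj0; rewrite (eqP hj0); have := row_sub 0 (cyc M x); rewrite rowK.
case: (ltnP j0 k.+1) => hk.
  by have := row_sub (Ordinal hk) (cyc M x); rewrite rowK.
have -> : j0 = ((j0 - k) + k)%N by rewrite subnK // ltnW.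
rewrite exprD hc mulr_sumr mulmx_sumr; apply/summx_sub => i _.
rewrite -mulmxE -!scalemxAr; apply/scalemx_sub; rewrite mulmxE.
rewrite -exprD; apply: IH.
have := ltn_ord i; rewrite -ltnS in hj0; lia.
Qed.

Lemma cyc_stable k (M : 'M[F]_k) x : (cyc M x *m M <= cyc M x)%MS.
Proof.
apply/row_subP => i; rewrite row_mul rowK -mulmxA mulmxE -exprSr; exact: cyc_pow.
Qed.

Lemma cyc_poly k (M : 'M[F]_k) x (u : 'rV_k) : (u <= cyc M x)%MS ->
  exists c : 'I_k.+1 -> F, u = x *m \sum_i c i *: M ^+ i.
Proof.
move=> hu; exists (fun i => (u *m pinvmx (cyc M x)) 0 i).
rewrite -{1}(mulmxKpV hu) mulmx_sum_row mulmx_sumr; apply: eq_bigr => i _.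
by rewrite rowK scalemxAr.
Qed.
End Cyc.

Lemma exists_max (Pr : nat -> Prop) N : (forall k, Pr k -> (k <= N)%N) -> (exists k, Pr k) ->
  exists k, Pr k /\ forall k', Pr k' -> (k' <= k)%N.
Proof.
elim: N => [|N IH] hb hex.
  case: hex => k hk; exists k; split => // k' hk'.
  by have := hb _ hk'; have := hb _ hk; lia.
case: (classic (Pr N.+1)) => hN.
  by exists N.+1; split => // k' /hb.
apply: IH => // k hk; have := hb _ hk; rewrite leq_eqVlt => /orP[/eqP e|//].
by rewrite e in hk.
Qed.

Lemma arith_aux a b c d e f x : (d + 0 = a + b)%N -> (e + 0 = d + c)%N ->
  (f + 0 = a + c)%N -> (e + x = f + b)%N -> x = 0%N.
Proof. lia. Qed.

Lemma arith3 hh m c z : (hh + m + c = z + hh)%N -> (z - c = m)%N.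
Proof. lia. Qed.
Lemma arith4 h i n : (h < i)%N -> (i < n)%N -> (n - i + h < n)%N.
Proof. lia. Qed.
Lemma arith5 h i n : (i < n)%N -> (n - i + h + i = h + n)%N.
Proof. lia. Qed.
Lemma arith6 h i n : (i < n)%N -> (h < n - i + h)%N.
Proof. lia. Qed.

Lemma sum_le_eq (n : nat) (f g : 'I_n -> nat) : (forall l, f l <= g l)%N ->
  (\sum_l g l <= \sum_l f l)%N -> forall l, f l = g l.
Proof.
move=> hle hs l.
have : (\sum_l (g l - f l) == 0)%N by rewrite sumnB // subn_eq0.
rewrite sum_nat_eq0 => /forallP /(_ l) /=; rewrite subn_eq0 => hgf.
by apply/eqP; rewrite eqn_leq hle.
Qed.

Lemma kerco (F : fieldType) m k p (M : 'M[F]_(m, k)) (N : 'M_(k, p)) q (H : 'M_(q, p)) :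
  (M <= kermx (N *m cokermx H))%MS = (M *m N <= H)%MS.
Proof. by rewrite sub_kermx submxE mulmxA. Qed.

Lemma rank_coker (F : fieldType) m k (Z : 'M[F]_(m, k)) q (H : 'M_(q, k)) :
  \rank (Z *m cokermx H) = (\rank Z - \rank (Z :&: H))%N.
Proof.
have e : (kermx (cokermx H) :=: H)%MS.
  apply/eqmxP/andP; split; last by rewrite sub_kermx mulmx_coker.
  by rewrite submxE; apply/eqP/sub_kermxP; exact: submx_refl.
have := mxrank_mul_ker Z (cokermx H).
by rewrite (cap_eqmx (eqmx_refl Z) e) => <-; rewrite addnK.
Qed.

Lemma submx_mul_eq (F : fieldType) m1 m2 k p (M : 'M[F]_(m1,k)) (N : 'M_(m2,k)) (X Y : 'M_(k,p)) :
  (M <= N)%MS -> N *m X = N *m Y -> M *m X = M *m Y.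
Proof. by move=> h e; rewrite -(mulmxKpV h) -!mulmxA e. Qed.

Lemma sub_rank_eq (F : fieldType) m1 m2 k (U : 'M[F]_(m1,k)) (V : 'M_(m2,k)) :
  (U <= V)%MS -> \rank U = \rank V -> (V <= U)%MS.
Proof. by move=> sUV e; case: (mxrank_leqif_sup sUV) => _ <-; rewrite e eqxx. Qed.

Section Core.
Variables (F : fieldType) (n : nat) (succ : 'I_n -> 'I_n).
Hypothesis Hcyc : forall a, iter n succ a = a.
Hypothesis Hinj : forall a i j, (i < n)%N -> (j < n)%N -> iter i succ a = iter j succ a -> i = j.
Hypothesis Hsurj : forall a w, exists2 i, (i < n)%N & iter i succ a = w.
Variables (D : 'I_n -> nat) (A : forall l, 'M[F]_(D l)) (Bf : forall l l', 'M[F]_(D l, D l')).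
Hypothesis HBf : forall l l', l' != succ l -> Bf l l' = 0.

Definition Idm (a w : 'I_n) : 'M[F]_(D a, D w) :=
  \matrix_(i, j) ((a == w) && (nat_of_ord i == nat_of_ord j))%:R.

Lemma Idm_refl a : Idm a a = 1%:M.
Proof. by apply/matrixP => i j; rewrite !mxE eqxx /=. Qed.

Lemma Idm_neq a w : a != w -> Idm a w = 0.
Proof. by move=> /negPf h; apply/matrixP => i j; rewrite !mxE h. Qed.

Fixpoint P (i : nat) (a w : 'I_n) {struct i} : 'M[F]_(D a, D w) :=
  match i with 0 => Idm a w | i'.+1 => \sum_u Bf a u *m P i' u w end.

Lemma P_S i a w : P i.+1 a w = Bf a (succ a) *m P i (succ a) w.
Proof.
rewrite /= (bigD1 (succ a)) //= big1 ?addr0 // => u hu.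
by rewrite HBf ?mul0mx.
Qed.

Lemma P_supp i a w : w != iter i succ a -> P i a w = 0.
Proof.
elim: i a => [|i IH] a hw /=; first by rewrite Idm_neq // eq_sym.
rewrite -/(P i.+1 a w) P_S IH ?mulmx0 //.
by rewrite -iterSr.
Qed.

Lemma P0 a : P 0 a a = 1%:M.
Proof. exact: Idm_refl. Qed.

Lemma P_comp i j a w : P (i + j) a w = \sum_u P i a u *m P j u w.
Proof.
elim: i a => [|i IH] a /=.
  rewrite (bigD1 a) //= Idm_refl mul1mx big1 ?addr0 // => u hu.
  by rewrite Idm_neq ?mul0mx // eq_sym.
under eq_bigr do rewrite IH mulmx_sumr.
rewrite exchange_big /=; apply: eq_bigr => u _.
by rewrite mulmx_suml; apply: eq_bigr => v _; rewrite mulmxA.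
Qed.

Lemma P_comp1 i j a w : P (i + j) a w = P i a (iter i succ a) *m P j (iter i succ a) w.
Proof.
rewrite P_comp (bigD1 (iter i succ a)) //= big1 ?addr0 // => u hu.
by rewrite P_supp ?mul0mx.
Qed.

Lemma P1 a w : P 1 a w = Bf a w.
Proof.
rewrite /= (bigD1 w) //= Idm_refl mulmx1 big1 ?addr0 // => u hu.
by rewrite Idm_neq ?mulmx0.
Qed.

Lemma P_Sr i a w : P i.+1 a w = P i a (iter i succ a) *m Bf (iter i succ a) w.
Proof. by rewrite -addn1 P_comp1 P1. Qed.


Variable zeta : 'I_n -> rat.
Hypothesis Hwall : forall a h, (h < n)%N ->
  \sum_(k in [set w | [exists i : 'I_h.+1, iter i succ a == w]]) zeta k = 0 ->
  exists i : 'I_h.+1, D (iter i succ a) = 0%N.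

Definition fam := forall l, 'M[F]_(D l).
Definition theta (U : fam) : rat := \sum_l zeta l * (\rank (U l))%:R.
Definition invar (U : fam) := forall l, (U l *m A l <= U l)%MS /\ forall l', (U l *m Bf l l' <= U l')%MS.
Definition subf (U V : fam) := forall l, (U l <= V l)%MS.

Lemma theta_add (U V W : fam) : (forall l, \rank (U l) + \rank (V l) = \rank (W l))%N ->
  theta U + theta V = theta W.
Proof.
move=> h; rewrite /theta -big_split /=; apply: eq_bigr => l _.
by rewrite -mulrDr -natrD h.
Qed.

Section WithS.
Variable S : fam.
Hypothesis HSinv : invar S.
Hypothesis Hcomm : forall l l', S l *m (A l *m Bf l l') = S l *m (Bf l l' *m A l').

Lemma SA l : (S l *m A l <= S l)%MS.
Proof. by case: (HSinv l). Qed.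

Lemma SB l l' : (S l *m Bf l l' <= S l')%MS.
Proof. by case: (HSinv l). Qed.

Lemma SP i a w : (S a *m P i a w <= S w)%MS.
Proof.
elim: i a => [|i IH] a.
  have [<-|ne] := eqVneq a w; first by rewrite P0 mulmx1.
  by rewrite /= Idm_neq // mulmx0 sub0mx.
rewrite P_S mulmxA; apply: submx_trans (IH (succ a)); exact/submxMr/SB.
Qed.

Lemma SPA i a w : S a *m (P i a w *m A w) = S a *m (A a *m P i a w).
Proof.
elim: i a => [|i IH] a.
  have [<-|ne] := eqVneq a w; first by rewrite P0 mulmx1 mul1mx.
  by rewrite /= Idm_neq // mulmx0 mul0mx.
rewrite P_S.
transitivity ((S a *m Bf a (succ a)) *m (P i (succ a) w *m A w)); first by rewrite !mulmxA.
rewrite (submx_mul_eq (SB a (succ a)) (IH _)).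
transitivity ((S a *m (Bf a (succ a) *m A (succ a))) *m P i (succ a) w); first by rewrite !mulmxA.
by rewrite -Hcomm !mulmxA.
Qed.

Lemma MPA m i a w (M : 'M_(m, D a)) : (M <= S a)%MS -> M *m (P i a w *m A w) = M *m (A a *m P i a w).
Proof. by move=> h; apply: submx_mul_eq h (SPA i a w). Qed.

Definition pol N (c : 'I_N -> F) l : 'M[F]_(D l) := \sum_(i < N) c i *: A l ^+ i.

Lemma SApow i l : (S l *m A l ^+ i <= S l)%MS.
Proof.
elim: i => [|i IH]; first by rewrite expr0 mulmx1.
by rewrite exprS mulmxE mulrA -mulmxE; apply: submx_trans (submxMr _ (SA l)) IH.
Qed.

Lemma SApowB i l l' : S l *m (A l ^+ i *m Bf l l') = S l *m (Bf l l' *m A l' ^+ i).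
Proof.
elim: i => [|i IH]; first by rewrite !expr0 mul1mx mulmx1.
rewrite exprS -mulmxE.
transitivity ((S l *m A l) *m (A l ^+ i *m Bf l l')); first by rewrite !mulmxA.
rewrite (submx_mul_eq (SA l) IH).
transitivity ((S l *m (A l *m Bf l l')) *m A l' ^+ i); first by rewrite !mulmxA.
by rewrite Hcomm exprS -mulmxE !mulmxA.
Qed.

Lemma Spol N (c : 'I_N -> F) l : (S l *m pol c l <= S l)%MS.
Proof.
rewrite /pol mulmx_sumr; apply/summx_sub => i _.
by rewrite -scalemxAr; apply/scalemx_sub/SApow.
Qed.

Lemma pol_comm N (c : 'I_N -> F) l : pol c l *m A l = A l *m pol c l.
Proof.
rewrite /pol mulmx_suml mulmx_sumr; apply: eq_bigr => i _.
by rewrite -scalemxAl -scalemxAr !mulmxE -exprSr -exprS.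
Qed.

Lemma pol_commX N (c : 'I_N -> F) l k : pol c l *m A l ^+ k = A l ^+ k *m pol c l.
Proof.
elim: k => [|k IH]; first by rewrite expr0 mulmx1 mul1mx.
by rewrite exprS -mulmxE mulmxA pol_comm -mulmxA IH mulmxA.
Qed.

Lemma Spol_B N (c : 'I_N -> F) l l' : S l *m (pol c l *m Bf l l') = S l *m (Bf l l' *m pol c l').
Proof.
rewrite /pol mulmx_suml mulmx_sumr !mulmx_sumr; apply: eq_bigr => i _.
by rewrite -scalemxAl -!scalemxAr SApowB.
Qed.

Hypothesis Hss : forall U, subf U S -> invar U -> theta U <= 0.
Hypothesis H0 : theta S = 0.
Hypothesis Hstab : forall U, subf U S -> invar U -> theta U = 0 ->
  (forall l, \rank (U l) = 0%N) \/ (forall l, \rank (U l) = \rank (S l)).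

Lemma Sch (phi : fam) :
  (forall l, (S l *m phi l <= S l)%MS) ->
  (forall l, S l *m (phi l *m A l) = S l *m (A l *m phi l)) ->
  (forall l l', S l *m (phi l *m Bf l l') = S l *m (Bf l l' *m phi l')) ->
  (forall l, S l *m phi l = 0) \/ (forall l, \rank (S l :&: kermx (phi l)) = 0%N).
Proof.
move=> h1 h2 h3.
pose K : fam := fun l => (S l :&: kermx (phi l))%MS.
pose I : fam := fun l => S l *m phi l.
have KS : subf K S by move=> l; exact: capmxSl.
have Kphi l : K l *m phi l = 0.
  by apply/sub_kermxP; exact: capmxSr.
have KinvA l : (K l *m A l <= K l)%MS.
  rewrite sub_capmx (submx_trans (submxMr _ (KS l)) (SA l)) /=.
  apply/sub_kermxP; rewrite -mulmxA -(submx_mul_eq (KS l) (h2 l)) mulmxA.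
  by rewrite Kphi mul0mx.
have KinvB l l' : (K l *m Bf l l' <= K l')%MS.
  rewrite sub_capmx (submx_trans (submxMr _ (KS l)) (SB l l')) /=.
  apply/sub_kermxP; rewrite -mulmxA -(submx_mul_eq (KS l) (h3 l l')) mulmxA.
  by rewrite Kphi mul0mx.
have IS : subf I S by [].
have Iinv : invar I.
  move=> l; split.
    rewrite /I -mulmxA h2 mulmxA; exact: submxMr (SA l).
  move=> l'; rewrite /I -mulmxA h3 mulmxA; exact: submxMr (SB l l').
have Kinv : invar K by move=> l; split => //.
have hr : theta I + theta K = theta S.
  by apply: theta_add => l; rewrite mxrank_mul_ker.
have hI := Hss IS Iinv; have hK := Hss KS Kinv.
have hK0 : theta K = 0.
  rewrite H0 in hr.
  have e : theta K = - theta I by apply/eqP; rewrite -addr_eq0 addrC hr.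
  by apply/eqP; rewrite eq_le hK /= e oppr_ge0 hI.
case: (Hstab KS Kinv hK0) => hK'; [right => l; exact: hK' | left => l].
apply/sub_kermxP; apply: submx_trans (capmxSr (S l) _).
exact: (sub_rank_eq (KS l) (hK' l)).
Qed.

Lemma cyc_sub w (y : 'rV_(D w)) : (y <= S w)%MS -> (cyc (A w) y <= S w)%MS.
Proof. by move=> hy; apply: cyc_min hy; exact: SA. Qed.

Lemma nz_row m k (U : 'M[F]_(m, k)) : U != 0 -> exists i, row i U != 0.
Proof.
move=> hU; apply/existsP; apply: contraR hU => /existsPn h.
by apply/eqP/row_matrixP => i; rewrite row0; apply/eqP; move/negPn: (h i).
Qed.

Lemma cyc_simple w (y : 'rV_(D w)) m (U : 'M_(m, D w)) : (y <= S w)%MS ->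
  (U *m A w <= U)%MS -> (U <= cyc (A w) y)%MS -> U != 0 -> (cyc (A w) y <= U)%MS.
Proof.
move=> hy hUA hUc hU0.
have [i hi] := nz_row hU0.
set u := row i U.
have huU : (u <= U)%MS by exact: row_sub.
have [c hc] := cyc_poly (submx_trans huU hUc).
pose phi : fam := pol c.
have hcomm l : S l *m (phi l *m A l) = S l *m (A l *m phi l) by rewrite /phi pol_comm.
have [h0|hk] := Sch (phi := phi) (fun l => Spol c l) hcomm (fun l l' => Spol_B c l l').
  case/negP: hi; apply/eqP; rewrite -/u hc.
  have e0 : S w *m phi w = S w *m 0 by rewrite h0 mulmx0.
  by have := submx_mul_eq hy e0; rewrite mulmx0.
have hcS := cyc_sub hy.
have r1 : \rank (cyc (A w) y *m phi w) = \rank (cyc (A w) y).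
  have := mxrank_mul_ker (cyc (A w) y) (phi w).
  have : \rank (cyc (A w) y :&: kermx (phi w)) = 0%N.
    apply/eqP; rewrite -leqn0 -(hk w); apply: mxrankS; exact: capmxS.
  by move=> ->; rewrite addn0.
have e : cyc (A w) y *m phi w = cyc (A w) u.
  apply/row_matrixP => j; rewrite row_mul !rowK hc -!mulmxA; congr (_ *m _).
  by rewrite pol_commX.
have hcu : (cyc (A w) u <= U)%MS by exact: cyc_min.
apply: (sub_rank_eq hUc); apply/eqP; rewrite eqn_leq (mxrankS hUc) /=.
by rewrite -r1 e mxrankS.
Qed.

Lemma C_comm l l' : P n l l *m Bf l l' = Bf l l' *m P n l' l'.
Proof.
have e1 : P n.+1 l l' = P n l l *m Bf l l' by rewrite P_Sr Hcyc.
have e2 : P n.+1 l l' = Bf l l' *m P n l' l'.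
  rewrite P_S; have [->|ne] := eqVneq l' (succ l) => //.
  rewrite (HBf ne) mul0mx P_supp ?mulmx0 //.
  by rewrite -iterSr iterS Hcyc.
by rewrite -e1 e2.
Qed.

Lemma caseI : (forall l, \rank (S l :&: kermx (P n l l)) = 0%N) -> forall l, \rank (S l) = 0%N.
Proof.
move=> hC a.
have hn : (0 < n)%N by case: a => a' /=; lia.
have mono l : (\rank (S l) <= \rank (S (succ l)))%N.
  have := mxrank_mul_ker (S l) (Bf l (succ l)).
  have -> : \rank (S l :&: kermx (Bf l (succ l))) = 0%N.
    apply/eqP; rewrite -leqn0 -(hC l); apply/mxrankS/capmxS => //.
    have -> : P n l l = P n.-1.+1 l l by rewrite prednK.
    by rewrite P_S sub_kermx mulmxA mulmx_ker mul0mx.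
  move=> <-; rewrite addn0; apply: mxrankS; exact: SB.
have ge b j : (\rank (S b) <= \rank (S (iter j succ b)))%N.
  elim: j => [|j IH] //=; exact: leq_trans IH (mono _).
have const w : \rank (S w) = \rank (S a).
  have [i hi <-] := Hsurj a w; apply/eqP; rewrite eqn_leq ge andbT.
  have := ge (iter i succ a) (n - i)%N; rewrite -iterD subnK ?Hcyc //; exact: ltnW.
have hth : theta S = (\rank (S a))%:R * \sum_l zeta l.
  by rewrite /theta mulr_sumr; apply: eq_bigr => l _; rewrite const mulrC.
have [//|hr] := eqVneq (\rank (S a)) 0%N.
have hs : \sum_l zeta l = 0.
  by move: H0; rewrite hth => /eqP; rewrite mulf_eq0 pnatr_eq0 (negbTE hr) /= => /eqP.
have hn1 : (n.-1 < n)%N by rewrite prednK.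
have [i hi] : exists i : 'I_n.-1.+1, D (iter i succ a) = 0%N.
  apply: Hwall => //; rewrite -[RHS]hs; apply: eq_bigl => k; rewrite inE.
  apply/existsP; have [i hi e] := Hsurj a k.
  have hi' : (i < n.-1.+1)%N by rewrite prednK.
  by exists (Ordinal hi'); rewrite /= e.
have := leq_trans (rank_leq_col (S (iter i succ a))) (eq_leq hi).
by rewrite const leqn0 (negbTE hr).
Qed.

Lemma caseII : (forall l, S l *m P n l l = 0) -> forall l, \rank (S l) = 0%N.
Proof.
move=> hC l0; apply/eqP; apply: contraT => hl0.
have hn : (0 < n)%N by case: l0 {hl0} => ? /=; lia.
have vanN a w : S a *m P n a w = 0.
  have [<-|ne] := eqVneq a w; first exact: hC.
  by rewrite P_supp ?mulmx0 // Hcyc eq_sym.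
pose ph i := (i < n)%N && [exists a, S a *m P i a (iter i succ a) != 0].
have exP : exists i, ph i.
  exists 0%N; rewrite /ph hn /=; apply/existsP; exists l0.
  by rewrite /= Idm_refl mulmx1 -mxrank_eq0.
have bP i : ph i -> (i <= n)%N by case/andP => /ltnW.
case: (ex_maxnP exP bP) => h /andP[hhn /existsP[a ha]] hmax.
set b := iter h succ a.
have van i a' w : (h < i)%N -> S a' *m P i a' w = 0.
  move=> hi; have -> : i = (h.+1 + (i - h.+1))%N by rewrite subnKC.
  rewrite P_comp1 mulmxA.
  suff -> : S a' *m P h.+1 a' (iter h.+1 succ a') = 0 by rewrite mul0mx.
  have := hhn; rewrite leq_eqVlt => /orP[/eqP e|hlt].
    by rewrite e Hcyc; exact: hC.
  case: (boolP (ph h.+1)) => [/hmax|hn1]; first by rewrite ltnn.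
  move: hn1; rewrite /ph hlt /= negb_exists => /forallP /(_ a').
  by rewrite negbK => /eqP.
have [i0 hi0] := nz_row ha.
set x := row i0 (S a).
have hxS : (x <= S a)%MS by exact: row_sub.
have hxP : x *m P h a b != 0 by rewrite -row_mul.
set W := cyc (A a) x.
have hWS : (W <= S a)%MS by exact: cyc_sub.
have hWA : (W *m A a <= W)%MS by exact: cyc_stable.
set m := \rank W.
have hWP : \rank (W *m P h a b) = m.
  set K := (W :&: kermx (P h a b))%MS.
  have hK0 : K = 0.
    apply/eqP; apply: contraT => hK.
    have hKW : (K <= W)%MS by exact: capmxSl.
    have hKA : (K *m A a <= K)%MS.
      rewrite sub_capmx (submx_trans (submxMr _ hKW) hWA) /=.
      rewrite sub_kermx -mulmxA -(MPA _ _ (submx_trans hKW hWS)) mulmxA.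
      by have /sub_kermxP -> := capmxSr W (kermx (P h a b)); rewrite mul0mx.
    have := cyc_simple hxS hKA hKW hK; rewrite -/W => hWK.
    have : (x <= kermx (P h a b))%MS.
      exact: submx_trans (cyc_x _ _) (submx_trans hWK (capmxSr _ _)).
    by rewrite sub_kermx (negbTE hxP).
  by have := mxrank_mul_ker W (P h a b); rewrite -/K hK0 mxrank0 addn0.
have hWPi i : (i <= h)%N -> \rank (W *m P i a (iter i succ a)) = m.
  move=> hi; apply/eqP; rewrite eqn_leq mxrankM_maxl /=.
  have : P h a b = P (i + (h - i)) a b by rewrite subnKC.
  rewrite P_comp1 => e; rewrite -{1}hWP e mulmxA; exact: mxrankM_maxl.
have hm : (0 < m)%N.
  rewrite lt0n; apply/eqP => hm0; case/negP: hxP; apply/eqP.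
  have W0 : W = 0 by apply/eqP; rewrite -mxrank_eq0 -/m hm0.
  have := cyc_x (A a) x; rewrite -/W W0 => /submx0null ->.
  by rewrite mul0mx.
set J := [set w | [exists i : 'I_h.+1, iter i succ a == w]].
have hJ w : reflect (exists2 i, (i <= h)%N & iter i succ a = w) (w \in J).
  rewrite inE; apply: (iffP existsP) => [[i /eqP e]|[i hi e]].
    by exists i => //; rewrite -ltnS.
  by exists (Ordinal (hi : (i < h.+1)%N)); rewrite /= e.
have uniq_i i j : (i <= h)%N -> (j <= h)%N -> iter i succ a = iter j succ a -> i = j.
  by move=> hi hj; apply: Hinj; lia.
pose X : fam := fun w => (\sum_(i < h.+1) <<W *m P i a w>>)%MS.
have Xrank w : \rank (X w) = if w \in J then m else 0%N.
  case: hJ => [[i hi e]|hnot].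
    rewrite /X (bigD1 (Ordinal (hi : (i < h.+1)%N))) //= big1 ?addsmx0_id.
      by rewrite genmxE -e hWPi.
    move=> j hj; rewrite P_supp ?mulmx0 ?genmx0 //; apply/eqP => e2.
    have := uniq_i j i; rewrite -e in e2; move/(_ (ltn_ord j)) => /(_ hi) /(_ (esym e2)) ej.
    by move: hj; rewrite -val_eqE /= ej eqxx.
  rewrite /X big1 ?mxrank0 // => j _; rewrite P_supp ?mulmx0 ?genmx0 //.
  apply/eqP => e; apply: hnot; exists j; [by rewrite -ltnS | by rewrite e].
have WPS i w : (W *m P i a w <= S w)%MS.
  exact: submx_trans (submxMr _ hWS) (SP i a w).
have Xsub : subf X S.
  by move=> w; apply/sumsmx_subP => i _; rewrite genmxE.
have Xinv : invar X.
  move=> w; split.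
    rewrite (sumsmxMr _ _ (A w)); apply/sumsmx_subP => i _.
    rewrite (eqmxMr _ (genmxE _)).
    rewrite -mulmxA (MPA _ _ hWS) mulmxA.
    apply: (sumsmx_sup i) => //; rewrite genmxE; exact: submxMr.
  move=> w'; rewrite (sumsmxMr_gen _ _ (Bf w w')); apply/sumsmx_subP => i _.
  rewrite genmxE (eqmxMr _ (genmxE _)).
  have [e|ne] := eqVneq w (iter i succ a); last by rewrite P_supp // mulmx0 mul0mx sub0mx.
  rewrite -mulmxA e -P_Sr.
  have := ltn_ord i; rewrite ltnS leq_eqVlt => /orP[/eqP ei|hi].
    rewrite ei; have e0 : S a *m P h.+1 a w' = S a *m 0 by rewrite van // mulmx0.
    by rewrite (submx_mul_eq hWS e0) mulmx0 sub0mx.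
  apply: (sumsmx_sup (Ordinal (hi : (i.+1 < h.+1)%N))) => //; rewrite genmxE.
  exact: submx_refl.
have thetaX : theta X = (m%:R) * \sum_(w in J) zeta w.
  rewrite /theta mulr_sumr [RHS]big_mkcond /=; apply: eq_bigr => w _.
  by rewrite Xrank; case: (w \in J); rewrite ?mulr0 // mulrC.
set T := W *m P h a b.
have hTS : (T <= S b)%MS by exact: WPS.
have hTA : (T *m A b <= T)%MS.
  by rewrite /T -mulmxA (MPA _ _ hWS) mulmxA; exact: submxMr.
pose Pr k := exists H : 'M[F]_(D b), [/\ (H *m A b <= H)%MS, (H <= S b)%MS,
   \rank (H :&: T) = 0%N & \rank H = k].
have [k [[H [hHA hHS hHT hHk]] hmaxk]] : exists k, Pr k /\ forall k', Pr k' -> (k' <= k)%N.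
  apply: (@exists_max _ (D b)).
    by move=> k' [H' [_ _ _ <-]]; exact: rank_leq_col.
  exists 0%N, 0; split; rewrite ?mul0mx ?sub0mx ?cap0mx ?mxrank0 //.
have hmaxH (H' : 'M[F]_(D b)) : (H' *m A b <= H')%MS -> (H' <= S b)%MS ->
    \rank (H' :&: T) = 0%N -> (\rank H' <= \rank H)%N.
  by move=> h1 h2 h3; rewrite hHk; apply: hmaxk; exists H'.
have HT : (S b <= H + T)%MS.
  apply: contraT => hnot; case/row_subPn: hnot => j hj.
  set y := row j (S b).
  have hyS : (y <= S b)%MS by exact: row_sub.
  set G := cyc (A b) y.
  have hGS : (G <= S b)%MS by exact: cyc_sub.
  have hGA : (G *m A b <= G)%MS by exact: cyc_stable.
  have hHTA : ((H + T)%MS *m A b <= H + T)%MS.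
    by rewrite addsmxMr; exact: addsmxS.
  have hGC : (G :&: (H + T))%MS = 0.
    apply/eqP; apply: contraT => hGC.
    have hGCA : ((G :&: (H + T))%MS *m A b <= G :&: (H + T))%MS.
      rewrite sub_capmx (submx_trans (submxMr _ (capmxSl _ _)) hGA).
      exact: submx_trans (submxMr _ (capmxSr _ _)) hHTA.
    have := cyc_simple hyS hGCA (capmxSl _ _) hGC => hGGC.
    case/negP: hj; exact: submx_trans (cyc_x _ _) (submx_trans hGGC (capmxSr _ _)).
  have r1 := mxrank_sum_cap H T.
  have r2 := mxrank_sum_cap (H + T)%MS G.
  rewrite capmxC hGC mxrank0 in r2.
  have r3 := mxrank_sum_cap H G.
  have : \rank (H :&: G) = 0%N.
    apply/eqP; rewrite -leqn0 -(mxrank0 F (D b) (D b)) -hGC; apply: mxrankS.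
    by rewrite capmxC; apply: capmxS => //; exact: addsmxSl.
  move=> r3'; rewrite r3' in r3.
  have r4 := mxrank_sum_cap (H + G)%MS T.
  have e : (H + G + T)%MS = (H + T + G)%MS by rewrite -!addsmxA (addsmxC G T).
  rewrite e in r4.
  have hy0 : (0 < \rank G)%N.
    rewrite lt0n; apply/eqP => hG0; case/negP: hj.
    have : (y <= G)%MS by exact: cyc_x.
    move/mxrankS; rewrite hG0 leqn0 mxrank_eq0 => /eqP; rewrite /y => ->; exact: sub0mx.
  have := hmaxH (H + G)%MS.
  have hHGA : ((H + G)%MS *m A b <= H + G)%MS by rewrite addsmxMr; exact: addsmxS.
  move/(_ hHGA); rewrite addsmx_sub hHS hGS => /(_ isT).
  rewrite hHT in r1.
  have -> : \rank ((H + G)%MS :&: T) = 0%N by apply: (arith_aux r1 r2 r3 r4).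
  move/(_ erefl); rewrite addn0 in r3; rewrite r3 -{2}(addn0 (\rank H)) leq_add2l leqNgt hy0.
  by [].
pose Y : fam := fun w => (S w :&: \bigcap_(j < n) kermx (P j w b *m cokermx H))%MS.
have Ysub : subf Y S by move=> w; exact: capmxSl.
have Yker w (j : 'I_n) : (Y w *m P j w b <= H)%MS.
  rewrite -kerco; apply: submx_trans (capmxSr _ _) _.
  by apply: (bigcapmx_inf j) => //.
have Yinv : invar Y.
  move=> w; split.
    rewrite sub_capmx (submx_trans (submxMr _ (Ysub w)) (SA w)) /=.
    apply/sub_bigcapmxP => j _; rewrite kerco -mulmxA -(MPA _ _ (Ysub w)) mulmxA.
    exact: submx_trans (submxMr _ (Yker w j)) hHA.
  move=> w'; rewrite sub_capmx (submx_trans (submxMr _ (Ysub w)) (SB w w')) /=.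
  apply/sub_bigcapmxP => j _; rewrite kerco.
  have [e|ne] := eqVneq w' (succ w); last by rewrite HBf // mulmx0 mul0mx sub0mx.
  rewrite e -mulmxA -P_S.
  have := ltn_ord j; rewrite leq_eqVlt => /orP[/eqP ej|hj].
    have e0 : S w *m P n w b = S w *m 0 by rewrite vanN mulmx0.
    by rewrite ej (submx_mul_eq (Ysub w) e0) mulmx0 sub0mx.
  exact: (Yker w (Ordinal (hj : (j.+1 < n)%N))).
have Ygen w j0 : (j0 < n)%N -> iter j0 succ w = b ->
    (\rank (S w) - \rank (Y w))%N = \rank (S w *m P j0 w b *m cokermx H).
  move=> hj0 ej0.
  have eY : \rank (Y w) = \rank (S w :&: kermx (P j0 w b *m cokermx H)).
    apply/eqP; rewrite eqn_leq; apply/andP; split; apply: mxrankS.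
      rewrite sub_capmx capmxSl /=; apply: submx_trans (capmxSr _ _) _.
      exact: (bigcapmx_inf (Ordinal hj0)).
    rewrite sub_capmx capmxSl /=; apply/sub_bigcapmxP => j _.
    have [ej|nej] := eqVneq (nat_of_ord j) j0; first by rewrite ej capmxSr.
    rewrite (@P_supp j w b) ?mul0mx; first by rewrite sub_kermx mulmx0.
    apply/eqP => e2; case/eqP: nej; apply: (@Hinj w j j0 (ltn_ord j) hj0).
    by rewrite -e2 ej0.
  have := mxrank_mul_ker (S w) (P j0 w b *m cokermx H).
  by rewrite -eY mulmxA => <-; rewrite addnK.
have Yrank w : (\rank (S w) - \rank (Y w))%N = if w \in J then m else 0%N.
  case: hJ => [[i hi e]|hnot].
    have hj0 : (h - i < n)%N by exact: leq_ltn_trans (leq_subr i h) hhn.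
    rewrite (Ygen w (h - i)%N hj0); last by rewrite -e -iterD subnK.
    set Z := S w *m P (h - i)%N w b.
    rewrite rank_coker.
    have hTZ : (T <= Z)%MS.
      have : P h a b = P (i + (h - i)) a b by rewrite subnKC.
      rewrite /T P_comp1 e => ->; rewrite mulmxA; apply: submxMr; exact: WPS.
    have hZS : (Z <= S b)%MS by exact: SP.
    have r5 := mxrank_sum_cap Z H.
    have eZH : \rank (Z + H)%MS = \rank (S b).
      apply/eqP; rewrite eqn_leq mxrankS ?addsmx_sub ?hZS ?hHS //=.
      apply: mxrankS; apply: submx_trans HT _; rewrite addsmxC; exact: addsmxS.
    have eSb : \rank (S b) = (\rank H + m)%N.
      have r1 := mxrank_sum_cap H T; rewrite hHT addn0 hWP in r1.
      by rewrite -r1; apply/eqP; rewrite eqn_leq mxrankS //= mxrankS // addsmx_sub hHS hTS.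
    by apply: (@arith3 (\rank H)); rewrite -eSb -eZH r5.
  have [i' hi' e] := Hsurj a w.
  have hhi : (h < i')%N.
    by rewrite ltnNge; apply/negP => hle; apply: hnot; exists i'.
  rewrite (Ygen w (n - i' + h)%N (arith4 hhi hi')); last first.
    by rewrite -e -iterD arith5 // iterD Hcyc.
  by rewrite van ?mul0mx ?mxrank0 // arith6.
have thetaY : theta Y + (m%:R) * \sum_(w in J) zeta w = theta S.
  rewrite /theta mulr_sumr [X in _ + X]big_mkcond -big_split /=.
  apply: eq_bigr => w _.
  rewrite -[in RHS](subnKC (mxrankS (Ysub w))) Yrank natrD mulrDr.
  by case: (w \in J); rewrite ?mulr0 // [X in _ + X = _]mulrC.
have hX := Hss Xsub Xinv; rewrite thetaX in hX.
have hY := Hss Ysub Yinv.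
rewrite H0 in thetaY.
have hs : \sum_(w in J) zeta w = 0.
  have e : (m%:R) * \sum_(w in J) zeta w = - theta Y.
    by apply/eqP; rewrite -addr_eq0 addrC thetaY.
  have : (m%:R) * \sum_(w in J) zeta w == 0.
    by rewrite eq_le hX /= e oppr_ge0 hY.
  by rewrite mulf_eq0 pnatr_eq0 (gtn_eqF hm) /= => /eqP.
have [i hi] := Hwall hhn hs.
have hiJ : iter i succ a \in J by apply/hJ; exists i => //; rewrite -ltnS.
have := rank_leq_col (X (iter i succ a)); rewrite Xrank hiJ.
move=> hle; have := leq_trans hle (eq_leq hi); rewrite leqn0 => /eqP hm0.
by move: hm; rewrite hm0.
Qed.

End WithS.
Theorem core_main (S : fam) : invar S ->
  (forall l l', S l *m (A l *m Bf l l') = S l *m (Bf l l' *m A l')) ->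
  (forall U, subf U S -> invar U -> theta U <= 0) -> theta S = 0 ->
  forall l, \rank (S l) = 0%N.
Proof.
have [N] := ubnP (\sum_l \rank (S l)); elim: N S => // N IH S hlt hinv hcomm hss h0.
have Hstab : forall U, subf U S -> invar U -> theta U = 0 ->
    (forall l, \rank (U l) = 0%N) \/ (forall l, \rank (U l) = \rank (S l)).
  move=> U hUS hUinv hU0.
  have hle l : (\rank (U l) <= \rank (S l))%N by apply: mxrankS.
  case: (ltnP (\sum_l \rank (U l)) (\sum_l \rank (S l))) => hsum.
    left; apply: IH => //.
    - exact: leq_trans hsum _.
    - by move=> l l'; apply: submx_mul_eq (hUS l) (hcomm l l').
    - by move=> V hVU; apply: hss => l; exact: submx_trans (hVU l) (hUS l).
  by right; apply: sum_le_eq.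
pose C : fam := fun l => P n l l.
have C1 l : (S l *m C l <= S l)%MS by exact: SP.
have C2 l : S l *m (C l *m A l) = S l *m (A l *m C l) by exact: SPA.
have C3 l l' : S l *m (C l *m Bf l l') = S l *m (Bf l l' *m C l') by rewrite /C C_comm.
case: (Sch hinv hss h0 Hstab C1 C2 C3) => hC.
  exact: (caseII hinv hcomm hss h0 Hstab).
exact: (caseI hinv h0).
Qed.

End Core.

Section Orient.
Variables (n : nat) (hn : (0 < n)%N).

Lemma iter_ordS (a : 'I_n) i : nat_of_ord (iter i (@ordS n) a) = ((a + i) %% n)%N.
Proof.
elim: i => [|i IH]; first by rewrite addn0 modn_small.
by rewrite iterS /= IH -[((a + i) %% n).+1]addn1 modnDml addn1 addnS.
Qed.

Lemma Hcyc_S (a : 'I_n) : iter n (@ordS n) a = a.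
Proof. by apply/val_inj; rewrite /= iter_ordS modnDr modn_small. Qed.

Lemma Hinj_S (a : 'I_n) i j : (i < n)%N -> (j < n)%N ->
  iter i (@ordS n) a = iter j (@ordS n) a -> i = j.
Proof.
move=> hi hj /(congr1 val); rewrite /= !iter_ordS => /eqP.
by rewrite eqn_modDl !modn_small // => /eqP.
Qed.

Lemma Hsurj_S (a w : 'I_n) : exists2 i, (i < n)%N & iter i (@ordS n) a = w.
Proof.
exists ((w + n - a) %% n)%N; first exact: ltn_pmod.
apply/val_inj; rewrite /= iter_ordS modnDmr subnKC; last first.
  by apply: leq_trans (ltnW (ltn_ord a)) (leq_addl _ _).
by rewrite modnDr modn_small.
Qed.

Lemma iter_ordP (a : 'I_n) i : nat_of_ord (iter i (@ord_pred n) a) = ((a + i * n.-1) %% n)%N.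
Proof.
elim: i => [|i IH]; first by rewrite mul0n addn0 modn_small.
rewrite iterS /= IH.
have -> : (((a + i * n.-1) %% n + n).-1 = (a + i * n.-1) %% n + n.-1)%N.
  by rewrite -!subn1 addnBA.
by rewrite modnDml mulSnr addnA.
Qed.

Lemma Hcyc_P (a : 'I_n) : iter n (@ord_pred n) a = a.
Proof. by apply/val_inj; rewrite /= iter_ordP mulnC addnC modnMDl modn_small. Qed.

Lemma Hinj_P (a : 'I_n) i j : (i < n)%N -> (j < n)%N ->
  iter i (@ord_pred n) a = iter j (@ord_pred n) a -> i = j.
Proof.
move=> hi hj /(congr1 val); rewrite /= !iter_ordP => /eqP; rewrite eqn_modDl => /eqP e.
have e2 : ((i * n.-1 + (i + j)) %% n = (j * n.-1 + (i + j)) %% n)%N.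
  by rewrite -modnDml e modnDml.
have ei : (i * n.-1 + (i + j) = j + i * n)%N.
  by rewrite addnA -mulnSr prednK // addnC.
have ej : (j * n.-1 + (i + j) = i + j * n)%N.
  by rewrite (addnC i) addnA -mulnSr prednK // addnC.
by move: e2; rewrite ei ej (addnC j) (addnC i) !modnMDl !modn_small // => ->.
Qed.

Lemma Hsurj_P (a w : 'I_n) : exists2 i, (i < n)%N & iter i (@ord_pred n) a = w.
Proof.
set i := ((a + n - w) %% n)%N.
exists i; first exact: ltn_pmod.
apply/val_inj; rewrite /= iter_ordP.
have h1 : ((a + i * n.-1 + i) %% n = a %% n)%N.
  by rewrite -addnA -mulnSr prednK // addnC modnMDl.
have h2 : ((w + i) %% n = a %% n)%N.
  rewrite /i modnDmr subnKC; first by rewrite modnDr.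
  by apply: leq_trans (ltnW (ltn_ord w)) (leq_addl _ _).
have : ((a + i * n.-1 + i) %% n = (w + i) %% n)%N by rewrite h1 h2.
by move/eqP; rewrite eqn_modDr (modn_small (ltn_ord w)) => /eqP.
Qed.

Lemma sub_mod (a x y : nat) : (a <= n)%N -> (x = a + y %[mod n])%N -> ((x + n - a) %% n = y %% n)%N.
Proof.
move=> ha e; apply/eqP; rewrite -(eqn_modDr a) subnK; last by apply: leq_trans ha (leq_addl _ _).
by rewrite modnDr e addnC.
Qed.

Lemma iter_dist (a w : 'I_n) : iter ((w + n - a) %% n) (@ordS n) a = w.
Proof.
apply/val_inj; rewrite /= iter_ordS modnDmr subnKC; last first.
  by apply: leq_trans (ltnW (ltn_ord a)) (leq_addl _ _).
by rewrite modnDr modn_small.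
Qed.

Definition Jset (succ : 'I_n -> 'I_n) (a : 'I_n) h : {set 'I_n} :=
  [set w | [exists i : 'I_h.+1, iter i succ a == w]].

Lemma J_cyc (a : 'I_n) h : (h < n)%N -> Jset (@ordS n) a h = cyc_interval a (iter h (@ordS n) a).
Proof.
move=> hh; apply/setP => w; rewrite !inE iter_ordS.
have ha : (a <= n)%N by exact: ltnW.
rewrite (@sub_mod a ((a + h) %% n) h ha); last by rewrite modn_mod.
rewrite (modn_small hh).
apply/existsP/idP => [[i /eqP e]|hle].
  rewrite -e iter_ordS (@sub_mod a _ i ha) ?modn_mod // modn_small //.
    by rewrite -ltnS.
  exact: leq_trans (ltn_ord i) hh.
have hi : ((w + n - a) %% n < h.+1)%N by rewrite ltnS.
by exists (Ordinal hi); rewrite /= iter_dist.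
Qed.

Lemma SP_cancel k (x : 'I_n) : iter k (@ordS n) (iter k (@ord_pred n) x) = x.
Proof.
elim: k x => [|k IH] x //.
by rewrite iterSr iterS ord_predK IH.
Qed.

Lemma shift_pred (a : 'I_n) h i : (i <= h)%N ->
  iter i (@ordS n) (iter h (@ord_pred n) a) = iter (h - i) (@ord_pred n) a.
Proof.
move=> hi; have -> : iter h (@ord_pred n) a = iter i (@ord_pred n) (iter (h - i) (@ord_pred n) a).
  by rewrite -iterD subnKC.
exact: SP_cancel.
Qed.

Lemma J_pred (a : 'I_n) h : Jset (@ord_pred n) a h = Jset (@ordS n) (iter h (@ord_pred n) a) h.
Proof.
apply/setP => w; rewrite !inE; apply/existsP/existsP => [[i /eqP e]|[i /eqP e]].
  have hi : (h - i < h.+1)%N by rewrite ltnS leq_subr.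
  have hih : (i <= h)%N by rewrite -ltnS.
  by exists (Ordinal hi); rewrite /= shift_pred ?leq_subr // subKn // e.
have hi : (h - i < h.+1)%N by rewrite ltnS leq_subr.
have hih : (i <= h)%N by rewrite -ltnS.
by exists (Ordinal hi); rewrite /= -e shift_pred.
Qed.

Definition wallcond (succ : 'I_n -> 'I_n) (D : 'I_n -> nat) (z : 'I_n -> rat) :=
  forall a h, (h < n)%N -> \sum_(k in Jset succ a h) z k = 0 ->
  exists i : 'I_h.+1, D (iter i succ a) = 0%N.

Lemma wallA_S zeta D : off_affine_walls zeta -> wallcond (@ordS n) D zeta.
Proof.
move=> [hw _] a h hh; rewrite J_cyc // => hs.
by move: (hw a (iter h (@ordS n) a)); rewrite hs eqxx.
Qed.

Lemma wallA_P zeta D : off_affine_walls zeta -> wallcond (@ord_pred n) D (fun l => - zeta l).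
Proof.
move=> [hw _] a h hh; rewrite sumrN J_pred J_cyc // => /eqP; rewrite oppr_eq0.
by rewrite (negbTE (hw _ _)).
Qed.

Lemma finJ zeta (hw : off_finite_walls zeta) (a : 'I_n) h : (h < n)%N ->
  \sum_(k in Jset (@ordS n) a h) zeta k = 0 ->
  exists i : 'I_h.+1, iter i (@ordS n) a = Ordinal hn.
Proof.
move=> hh hs.
case: (boolP [exists i : 'I_h.+1, iter i (@ordS n) a == Ordinal hn]) => [/existsP [i /eqP e]|hno].
  by exists i.
exfalso.
have hno' i : (i <= h)%N -> ((a + i) %% n)%N != 0%N.
  move=> hi; apply/negP => /eqP e; case/existsP: hno; rewrite -ltnS in hi.
  by exists (Ordinal hi); apply/eqP; apply: val_inj; rewrite /= iter_ordS e.
have ha0 : (0 < a)%N.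
  by have := hno' 0%N (leq0n _); rewrite addn0 modn_small // lt0n.
have hah : (a + h < n)%N.
  rewrite ltnNge; apply/negP => hle.
  have := hno' (n - a)%N; rewrite subnKC ?modnn ?eqxx; last exact: ltnW.
  by move/(_ (leq_trans (leq_sub2r a hle) (eq_leq (addKn a h)))).
have hJ (k : 'I_n) : (k \in Jset (@ordS n) a h) = (a <= k <= a + h)%N.
  rewrite inE; apply/existsP/idP => [[i /eqP e]|/andP [hk1 hk2]].
    rewrite -e iter_ordS modn_small; last by apply: leq_ltn_trans hah; rewrite leq_add2l -ltnS.
    by rewrite leq_addr /= leq_add2l -ltnS.
  have hi : (k - a < h.+1)%N by rewrite ltnS leq_subLR.
  by exists (Ordinal hi); apply/eqP; apply: val_inj; rewrite /= iter_ordS subnKC // modn_small.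
move: (hw a (a + h)%N ha0 (leq_addr h a) hah).
have e : \sum_(k < n | (a <= k <= a + h)%N) zeta k = \sum_(k in Jset (@ordS n) a h) zeta k.
  by apply: eq_bigl => k; rewrite hJ.
by rewrite e hs eqxx.
Qed.

Lemma wallB_S zeta d : d (Ordinal hn) = 0%N -> off_finite_walls zeta -> wallcond (@ordS n) d zeta.
Proof.
move=> hd hw a h hh hs; have [i e] := finJ hw hh hs.
by exists i; rewrite e.
Qed.

Lemma wallB_P zeta d : d (Ordinal hn) = 0%N -> off_finite_walls zeta ->
  wallcond (@ord_pred n) d (fun l => - zeta l).
Proof.
move=> hd hw a h hh; rewrite sumrN => /eqP; rewrite oppr_eq0 => /eqP; rewrite J_pred => hs.
have [i e] := finJ hw hh hs.
have hi : (h - i < h.+1)%N by rewrite ltnS leq_subr.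
have hih : (i <= h)%N by rewrite -ltnS.
by exists (Ordinal hi); rewrite /= -shift_pred // e.
Qed.

End Orient.

Lemma perp_mul (F : fieldType) k1 k2 k (U : 'M[F]_(k1, k)) (N : 'M_(k2, k)) :
  (N <= U)%MS -> kermx U^T *m N^T = 0.
Proof. by case/submxP => X ->; rewrite trmx_mul mulmxA mulmx_ker mul0mx. Qed.

Lemma perp_mul2 (F : fieldType) k0 k1 k2 k (K : 'M[F]_(k0, k)) (U : 'M[F]_(k1, k)) (N : 'M_(k2, k)) :
  (K <= kermx U^T)%MS -> (N <= U)%MS -> K *m N^T = 0.
Proof. by case/submxP => X -> hN; rewrite -mulmxA perp_mul // mulmx0. Qed.

Section Module.
Variables (F : fieldType) (n : nat) (d : 'I_n -> nat) (M : chainsaw_module F d).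

Definition Bfm (l l' : 'I_n) : 'M[F]_(d l, d l') :=
  match ordS l =P l' with ReflectT e => castmx (erefl, congr1 d e) (cB M l) | ReflectF _ => 0 end.

Lemma BfmS l : Bfm l (ordS l) = cB M l.
Proof. by rewrite /Bfm; case: eqP => // e; rewrite (eq_irrelevance e erefl) castmx_id. Qed.

Lemma BfmN l l' : l' != ordS l -> Bfm l l' = 0.
Proof. by rewrite /Bfm; case: eqP => // e /eqP h; exfalso; apply: h; rewrite e. Qed.

Lemma BfmE l (Pr : forall l', 'M[F]_(d l, d l') -> Prop) :
  Pr (ordS l) (cB M l) -> (forall l', l' != ordS l -> Pr l' 0) -> forall l', Pr l' (Bfm l l').
Proof.
move=> h1 h2 l'; have [->|ne] := eqVneq l' (ordS l); first by rewrite BfmS.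
by rewrite BfmN //; apply: h2.
Qed.

Lemma crelA l : cA M l *m cB M l = cB M l *m cA M (ordS l) + cq M l *m cp M (ordS l).
Proof.
have := crel M l; rewrite addrAC => /eqP; rewrite subr_eq0 => /eqP ->. by [].
Qed.

Lemma HBf_S l l' : l' != ordS l -> Bfm l l' = 0.
Proof. exact: BfmN. Qed.

Lemma semi_to_stab_a zeta : wallcond (@ordS n) d zeta ->
  (forall V', sub_a M V' -> zdim zeta V' <= 0) ->
  forall V', sub_a M V' -> ~ is_zero_sub V' -> zdim zeta V' < 0.
Proof.
move=> hw hss V' hV' hnz; rewrite lt_neqAle hss // andbT; apply/eqP => h0.
apply: hnz => l0; apply/eqP; move: l0.
case: hV' => hAB hq.
have hinv : invar (cA M) Bfm V'.
  move=> l; split; first exact: (hAB l).1.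
  apply: (BfmE (Pr := fun l' B => (V' l *m B <= V' l')%MS)); first exact: (hAB l).2.
  by move=> l' _; rewrite mulmx0 sub0mx.
have hcomm l l' : V' l *m (cA M l *m Bfm l l') = V' l *m (Bfm l l' *m cA M l').
  apply: (BfmE (Pr := fun l' B => V' l *m (cA M l *m B) = V' l *m (B *m cA M l'))); last first.
    by move=> l'' _; rewrite mulmx0 mul0mx.
  rewrite crelA mulmxDr mulmxA.
  by rewrite mulmxA; have /sub_kermxP -> := hq l; rewrite mul0mx addr0.
move=> l0; have hn : (0 < n)%N := leq_ltn_trans (leq0n _) (ltn_ord l0).
have := core_main (@Hcyc_S n) (@Hinj_S n) (Hsurj_S hn) HBf_S hw hinv hcomm.
apply => //.
move=> U hUV hUinv; apply: hss; split.
  move=> l; split; first exact: (hUinv l).1.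
  by rewrite -BfmS; exact: (hUinv l).2.
by move=> l; exact: submx_trans (hUV l) (hq l).
Qed.

Lemma HBf_P l l' : l' != ord_pred l -> (Bfm l' l)^T = 0.
Proof.
move=> ne; rewrite BfmN ?trmx0 //; apply: contra ne => /eqP ->; by rewrite ordSK.
Qed.

Lemma crelB l : cB M l *m cA M (ordS l) = cA M l *m cB M l - cq M l *m cp M (ordS l).
Proof. by rewrite crelA addrK. Qed.

Lemma semi_to_stab_b zeta : wallcond (@ord_pred n) d (fun l => - zeta l) ->
  (forall V', sub_b M V' -> 0 <= zcodim zeta V') ->
  forall V', sub_b M V' -> ~ is_full_sub V' -> 0 < zcodim zeta V'.
Proof.
move=> hw hss V' hV' hnf; rewrite lt_neqAle hss // andbT; apply/eqP => h0.
apply: hnf => l0; have hn : (0 < n)%N := leq_ltn_trans (leq0n _) (ltn_ord l0).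
case: hV' => hAB hp.
pose S' : fam F d := fun l => kermx (V' l)^T.
pose A' := fun l => (cA M l)^T.
pose Bf' := fun l l' => (Bfm l' l)^T.
have hinv : invar A' Bf' S'.
  move=> l; split.
    rewrite /S' /A' sub_kermx -mulmxA -trmx_mul perp_mul //; exact: (hAB l).1.
  move=> l'; rewrite /S' /Bf' sub_kermx -mulmxA -trmx_mul perp_mul //.
  apply: (BfmE (Pr := fun l B => (V' l' *m B <= V' l)%MS)); first exact: (hAB l').2.
  by move=> l'' _; rewrite mulmx0 sub0mx.
have hcomm l l' : S' l *m (A' l *m Bf' l l') = S' l *m (Bf' l l' *m A' l').
  rewrite /A' /Bf' -!trmx_mul.
  apply: (BfmE (Pr := fun l B => S' l *m (B *m cA M l)^T = S' l *m (cA M l' *m B)^T)); last first.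
    by move=> l'' _; rewrite mul0mx mulmx0.
  rewrite crelB linearB /= mulmxBr trmx_mul mulmxA.
  by rewrite [(cq M l' *m _)^T]trmx_mul mulmxA /S' (perp_mul (hp (ordS l'))) mul0mx subr0.
have hth U : theta (fun l => - zeta l) U = - theta zeta U.
  by rewrite /theta -sumrN; apply: eq_bigr => l _; rewrite mulNr.
have hcod U : zcodim zeta (fun l => kermx (U l)^T) = theta zeta U.
  rewrite /zcodim /theta; apply: eq_bigr => l _.
  by rewrite mxrank_ker mxrank_tr subKn // rank_leq_col.
have hss' U : subf U S' -> invar A' Bf' U -> theta (fun l => - zeta l) U <= 0.
  move=> hUS hUinv; rewrite hth oppr_le0 -hcod; apply: hss.
  split; last first.
    move=> l; rewrite sub_kermx -[cp M l]trmxK -trmx_mul (perp_mul2 (hUS l) (hp l)) trmx0.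
    by [].
  move=> l; split.
    rewrite sub_kermx -mulmxA -[cA M l]trmxK -trmx_mul perp_mul //; exact: (hUinv l).1.
  rewrite sub_kermx -mulmxA -[cB M l]trmxK -trmx_mul perp_mul //.
  by have := (hUinv (ordS l)).2 l; rewrite /Bf' BfmS.
have h0' : theta (fun l => - zeta l) S' = 0.
  have e : theta zeta S' = zcodim zeta V'.
    by rewrite /theta /zcodim; apply: eq_bigr => l _; rewrite /S' mxrank_ker mxrank_tr.
  by rewrite hth e -h0 oppr0.
have := core_main (Hcyc_P hn) (Hinj_P hn) (Hsurj_P hn) HBf_P hw hinv hcomm hss' h0' l0.
rewrite /S' mxrank_ker mxrank_tr => /eqP; rewrite subn_eq0 => hle.
by rewrite eqn_leq rank_leq_col.
Qed.

Lemma equiv_walls zeta : wallcond (@ordS n) d zeta -> wallcond (@ord_pred n) d (fun l => - zeta l) ->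
  (zeta_stable M zeta <-> zeta_semistable M zeta).
Proof.
move=> hwS hwP; split.
  case=> ha hb; split => V' hV'.
    case: (classic (is_zero_sub V')) => hz; last exact/ltW/ha.
    by rewrite /zdim big1 // => l _; rewrite (eqP (hz l)) mulr0.
  case: (classic (is_full_sub V')) => hf; last exact/ltW/hb.
  by rewrite /zcodim big1 // => l _; rewrite (eqP (hf l)) subnn mulr0.
case=> ha hb; split; [exact: semi_to_stab_a | exact: semi_to_stab_b].
Qed.

End Module.

Theorem proposition5p1 (F : fieldType) (n : nat) (hn : (0 < n)%N)
    (d : 'I_n -> nat) :
  (forall zeta : 'I_n -> rat, off_affine_walls zeta ->
     forall M : chainsaw_module F d, zeta_stable M zeta <-> zeta_semistable M zeta) /\
  (d (Ordinal hn) = 0%N ->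
   forall zeta : 'I_n -> rat, off_finite_walls zeta ->
     forall M : chainsaw_module F d, zeta_stable M zeta <-> zeta_semistable M zeta).
Proof.
split.
  move=> zeta hw M; apply: equiv_walls; [exact: wallA_S | exact: wallA_P].
move=> hd zeta hw M; apply: equiv_walls; [exact: (wallB_S hd) | exact: (wallB_P hd)].
Qed.
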